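(* For $i=1,2$ let $\alpha_i\in[-1,1]$ and let $f_{\alpha_i}=h_{\alpha_i}+\overline{g_{\alpha_i}}\in S_H$ with $h_{\alpha_i}(z)+g_{\alpha_i}(z)=\dfrac{z(1-\alpha_i z)}{1-z^2}$ (the two maps may have different dilatations). If $\alpha_1=\alpha_2$, then for every $0\le t\le1$ the map $f=tf_{\alpha_1}+(1-t)f_{\alpha_2}$ belongs to $S_H$ and maps $E$ onto a domain convex in the direction of the imaginary axis.
   Context: $E=\{z\in\mathbb{C}:|z|<1\}$. A harmonic mapping $f=h+\overline{g}$ on $E$ (with $h,g$ analytic) is locally univalent and sense-preserving iff $h'\neq0$ in $E$ and its dilatation $\omega=g'/h'$ satisfies $|\omega|<1$ in $E$. $S_H$ denotes the class of harmonic, univalent, sense-preserving mappings $f=h+\overline{g}$ of $E$ normalized by $f(0)=0$, $f_z(0)=1$. A domain $\Omega$ is convex in the direction of the imaginary axis if every line parallel to the imaginary axis has connected or empty intersection with $\Omega$. *)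

(* Defs.v *)
From Stdlib Require Import Reals Lra.
Open Scope R_scope.

Definition Cx : Type := (R * R)%type.

Definition RtoC (x : R) : Cx := (x, 0).
Definition Cre (z : Cx) : R := fst z.
Definition Cim (z : Cx) : R := snd z.
Definition Cadd (z w : Cx) : Cx := (fst z + fst w, snd z + snd w).
Definition Copp (z : Cx) : Cx := (- fst z, - snd z).
Definition Csub (z w : Cx) : Cx := Cadd z (Copp w).
Definition Cmul (z w : Cx) : Cx :=
  (fst z * fst w - snd z * snd w, fst z * snd w + snd z * fst w).
Definition Cconj (z : Cx) : Cx := (fst z, - snd z).
Definition Cinv (z : Cx) : Cx :=
  (fst z / (fst z ^ 2 + snd z ^ 2), - snd z / (fst z ^ 2 + snd z ^ 2)).
Definition Cdiv (z w : Cx) : Cx := Cmul z (Cinv w).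
Definition Cabs (z : Cx) : R := sqrt (fst z ^ 2 + snd z ^ 2).
Definition C0 : Cx := (0, 0).
Definition C1 : Cx := (1, 0).

Definition inE (z : Cx) : Prop := Cabs z < 1.

Definition has_cderiv (f : Cx -> Cx) (z d : Cx) : Prop :=
  forall eps : R, 0 < eps -> exists delta : R, 0 < delta /\
    forall w : Cx, Cabs (Csub w z) < delta ->
      Cabs (Csub (Csub (f w) (f z)) (Cmul d (Csub w z))) <= eps * Cabs (Csub w z).

Definition harm (h g : Cx -> Cx) (z : Cx) : Cx := Cadd (h z) (Cconj (g z)).

(* f = h + conj g belongs to S_H: h, g analytic in E, f locally univalent and
   sense-preserving (h' <> 0 and |g'/h'| < 1 in E), univalent in E,
   f(0) = 0 and f_z(0) = h'(0) = 1. *)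
Definition in_SH (h g : Cx -> Cx) : Prop :=
  exists h' g' : Cx -> Cx,
    (forall z, inE z -> has_cderiv h z (h' z) /\ has_cderiv g z (g' z)) /\
    (forall z, inE z -> h' z <> C0 /\ Cabs (Cdiv (g' z) (h' z)) < 1) /\
    (forall z w, inE z -> inE w -> harm h g z = harm h g w -> z = w) /\
    harm h g C0 = C0 /\
    h' C0 = C1.

Definition imageE (F : Cx -> Cx) (p : Cx) : Prop := exists z, inE z /\ F z = p.

Definition convex_imag (Omega : Cx -> Prop) : Prop :=
  forall x y1 y2 y : R, y1 <= y <= y2 ->
    Omega (x, y1) -> Omega (x, y2) -> Omega (x, y).

Definition cmix (t : R) (u v : Cx -> Cx) (z : Cx) : Cx :=
  Cadd (Cmul (RtoC t) (u z)) (Cmul (RtoC (1 - t)) (v z)).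

Definition shear_sum (a : R) (z : Cx) : Cx :=
  Cdiv (Cmul z (Csub C1 (Cmul (RtoC a) z))) (Csub C1 (Cmul z z)).

(* Main.v *)
Require Import Defs.
From Stdlib Require Import Reals.
From Stdlib Require Import Lra Psatz Field.
From Coquelicot Require Import Coquelicot.
Require Import Defs.
Open Scope R_scope.


Lemma Cx_eq (z w : Cx) : fst z = fst w -> snd z = snd w -> z = w.
Proof. destruct z, w; simpl; intros; subst; reflexivity. Qed.

Lemma Cring : ring_theory C0 C1 Cadd Cmul Csub Copp (@eq Cx).
Proof.
  constructor; intros; repeat match goal with p : Cx |- _ => destruct p end;
  unfold Cadd, Cmul, Csub, Copp, C0, C1; simpl; apply Cx_eq; simpl; ring.
Qed.

Lemma C1_neq_C0 : C1 <> C0.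
Proof. unfold C1, C0; intro H; injection H; lra. Qed.

Lemma Cfield : field_theory C0 C1 Cadd Cmul Csub Copp Cdiv Cinv (@eq Cx).
Proof.
  constructor.
  - exact Cring.
  - exact C1_neq_C0.
  - reflexivity.
  - intros [x y] H. unfold Cmul, Cinv, C1; simpl.
    assert (N : x ^ 2 + y ^ 2 <> 0).
    { intro E. apply H. unfold C0. assert (x = 0) by nra. assert (y = 0) by nra. subst; reflexivity. }
    apply Cx_eq; simpl; field; rewrite <- !Rsqr_pow2 in N; unfold Rsqr in N; auto.
Qed.

Add Field CxField : Cfield.

Lemma test (z w : Cx) : w <> C0 -> Cmul (Cdiv z w) w = z.
Proof. intros. field. auto. Qed.


Lemma sqrt_le_of (A B : R) : 0 <= B -> A <= B ^ 2 -> sqrt A <= B.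
Proof. intros HB H. rewrite <- (sqrt_pow2 B HB). apply sqrt_le_1_alt; auto. Qed.

Lemma Cabs_ge0 z : 0 <= Cabs z.
Proof. apply sqrt_pos. Qed.

Lemma Cabs_sq z : Cabs z ^ 2 = fst z ^ 2 + snd z ^ 2.
Proof. unfold Cabs; apply pow2_sqrt; nra. Qed.

Lemma Cabs_le_iff z w : Cabs z <= Cabs w <-> fst z ^ 2 + snd z ^ 2 <= fst w ^ 2 + snd w ^ 2.
Proof.
  split; intro H.
  - rewrite <- !Cabs_sq. pose proof (Cabs_ge0 z). nra.
  - apply sqrt_le_1_alt; auto.
Qed.

Lemma Cabs_lt_iff z w : Cabs z < Cabs w <-> fst z ^ 2 + snd z ^ 2 < fst w ^ 2 + snd w ^ 2.
Proof.
  split; intro H.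
  - rewrite <- !Cabs_sq. pose proof (Cabs_ge0 z). nra.
  - apply sqrt_lt_1_alt; split; [nra|auto].
Qed.

Lemma Cabs_mul z w : Cabs (Cmul z w) = Cabs z * Cabs w.
Proof.
  unfold Cabs. rewrite <- sqrt_mult by nra. f_equal. destruct z, w; simpl; ring.
Qed.

Lemma Cabs_triangle z w : Cabs (Cadd z w) <= Cabs z + Cabs w.
Proof.
  apply sqrt_le_of. pose proof (Cabs_ge0 z); pose proof (Cabs_ge0 w); lra.
  pose proof (Cabs_sq z); pose proof (Cabs_sq w).
  pose proof (sqrt_cauchy (fst z) (snd z) (fst w) (snd w)).
  unfold Rsqr in H1. replace (fst z * fst z + snd z * snd z) with (fst z ^2 + snd z ^2) in H1 by ring.
  replace (fst w * fst w + snd w * snd w) with (fst w ^2 + snd w ^2) in H1 by ring.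
  fold (Cabs z) in H1. fold (Cabs w) in H1.
  destruct z, w; simpl in *. nra.
Qed.

Lemma Cabs_fst z : Rabs (fst z) <= Cabs z.
Proof. rewrite <- sqrt_Rsqr_abs. apply sqrt_le_1_alt. rewrite Rsqr_pow2. destruct z; simpl; nra. Qed.
Lemma Cabs_snd z : Rabs (snd z) <= Cabs z.
Proof. rewrite <- sqrt_Rsqr_abs. apply sqrt_le_1_alt. rewrite Rsqr_pow2. destruct z; simpl; nra. Qed.

Lemma Cabs_le_sum z : Cabs z <= Rabs (fst z) + Rabs (snd z).
Proof.
  apply sqrt_le_of. pose proof (Rabs_pos (fst z)); pose proof (Rabs_pos (snd z)); lra.
  rewrite <- (pow2_abs (fst z)), <- (pow2_abs (snd z)).
  pose proof (Rabs_pos (fst z)); pose proof (Rabs_pos (snd z)); nra.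
Qed.

Lemma Cabs_RtoC t : Cabs (RtoC t) = Rabs t.
Proof. unfold Cabs, RtoC; simpl. rewrite <- sqrt_Rsqr_abs. f_equal. unfold Rsqr; ring. Qed.

Lemma Cabs_imag d : Cabs (0, d) = Rabs d.
Proof. unfold Cabs; simpl. rewrite <- sqrt_Rsqr_abs. f_equal. unfold Rsqr; ring. Qed.

Lemma Cabs_opp z : Cabs (Copp z) = Cabs z.
Proof. unfold Cabs, Copp; simpl; f_equal; ring. Qed.

Lemma Cabs_sub_sym z w : Cabs (Csub z w) = Cabs (Csub w z).
Proof. unfold Cabs, Csub, Cadd, Copp; simpl; f_equal; ring. Qed.

Lemma Cabs_pos z : z <> C0 -> 0 < Cabs z.
Proof.
  intro H. destruct (Rle_lt_or_eq_dec 0 (Cabs z) (Cabs_ge0 z)) as [h|h]; auto.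
  exfalso; apply H. pose proof (Cabs_sq z). rewrite <- h in H0.
  destruct z; simpl in *. assert (r = 0) by nra. assert (r0 = 0) by nra. subst; reflexivity.
Qed.



Lemma Cabs_div u v : v <> C0 -> Cabs (Cdiv u v) = Cabs u / Cabs v.
Proof.
  intro Hv. pose proof (Cabs_pos v Hv).
  assert (E : Cmul (Cdiv u v) v = u) by (field; auto).
  rewrite <- E at 2. rewrite Cabs_mul. field. lra.
Qed.

Lemma deriv_add f g z d e :
  has_cderiv f z d -> has_cderiv g z e ->
  has_cderiv (fun w => Cadd (f w) (g w)) z (Cadd d e).
Proof.
  intros Hf Hg eps He.
  destruct (Hf (eps/2)) as [d1 [Hd1 H1]]; [lra|].
  destruct (Hg (eps/2)) as [d2 [Hd2 H2]]; [lra|].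
  exists (Rmin d1 d2); split; [apply Rmin_glb_lt; auto|].
  intros w Hw.
  assert (Hw1 : Cabs (Csub w z) < d1) by (eapply Rlt_le_trans; [exact Hw| apply Rmin_l]).
  assert (Hw2 : Cabs (Csub w z) < d2) by (eapply Rlt_le_trans; [exact Hw| apply Rmin_r]).
  specialize (H1 w Hw1); specialize (H2 w Hw2).
  replace (Csub (Csub (Cadd (f w) (g w)) (Cadd (f z) (g z))) (Cmul (Cadd d e) (Csub w z)))
    with (Cadd (Csub (Csub (f w) (f z)) (Cmul d (Csub w z))) (Csub (Csub (g w) (g z)) (Cmul e (Csub w z)))) by ring.
  eapply Rle_trans; [apply Cabs_triangle|]. lra.
Qed.

Lemma deriv_scal t f z d :
  has_cderiv f z d -> has_cderiv (fun w => Cmul (RtoC t) (f w)) z (Cmul (RtoC t) d).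
Proof.
  intros Hf eps He.
  destruct (Hf (eps / (Rabs t + 1))) as [d1 [Hd1 H1]].
  { apply Rdiv_lt_0_compat; auto. pose proof (Rabs_pos t); lra. }
  exists d1; split; auto. intros w Hw. specialize (H1 w Hw).
  replace (Csub (Csub (Cmul (RtoC t) (f w)) (Cmul (RtoC t) (f z))) (Cmul (Cmul (RtoC t) d) (Csub w z)))
    with (Cmul (RtoC t) (Csub (Csub (f w) (f z)) (Cmul d (Csub w z)))) by ring.
  rewrite Cabs_mul, Cabs_RtoC.
  pose proof (Rabs_pos t). pose proof (Cabs_ge0 (Csub w z)).
  assert (Rabs t * (eps / (Rabs t + 1)) <= eps).
  { apply (Rmult_le_reg_r (Rabs t + 1)); [lra|]. field_simplify; [|lra]. nra. }
  apply Rle_trans with (Rabs t * (eps / (Rabs t + 1) * Cabs (Csub w z))).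
  apply Rmult_le_compat_l; auto. nra.
Qed.

Lemma deriv_opp f z d :
  has_cderiv f z d -> has_cderiv (fun w => Copp (f w)) z (Copp d).
Proof.
  intros Hf eps He. destruct (Hf eps He) as [d1 [Hd1 H1]]. exists d1; split; auto.
  intros w Hw. specialize (H1 w Hw).
  replace (Csub (Csub (Copp (f w)) (Copp (f z))) (Cmul (Copp d) (Csub w z)))
   with (Copp (Csub (Csub (f w) (f z)) (Cmul d (Csub w z)))) by ring.
  rewrite Cabs_opp; auto.
Qed.

Lemma deriv_unique F G z d1 d2 r :
  has_cderiv F z d1 -> has_cderiv G z d2 -> 0 < r ->
  (forall w, Cabs (Csub w z) < r -> F w = G w) -> d1 = d2.
Proof.
  intros HF HG Hr Heq.
  assert (Hk : forall eps, 0 < eps -> Cabs (Csub d1 d2) <= 2 * eps).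
  { intros eps He.
    destruct (HF eps He) as [a1 [Ha1 H1]]. destruct (HG eps He) as [a2 [Ha2 H2]].
    set (rho := Rmin (Rmin a1 a2) r / 2).
    assert (Hrho : 0 < rho) by (unfold rho; apply Rdiv_lt_0_compat; [repeat apply Rmin_glb_lt|]; lra).
    assert (Hrl : rho < Rmin (Rmin a1 a2) r) by (unfold rho in *; lra).
    set (w := Cadd z (rho, 0)).
    assert (Hw : Cabs (Csub w z) = rho).
    { unfold w. replace (Csub (Cadd z (rho, 0)) z) with (RtoC rho) by (apply Cx_eq; destruct z; simpl; ring).
      rewrite Cabs_RtoC. apply Rabs_right; lra. }
    assert (Hr1 : Cabs (Csub w z) < a1) by (rewrite Hw; eapply Rlt_le_trans; [exact Hrl|]; eapply Rle_trans; [apply Rmin_l|apply Rmin_l]).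
    assert (Hr2 : Cabs (Csub w z) < a2) by (rewrite Hw; eapply Rlt_le_trans; [exact Hrl|]; eapply Rle_trans; [apply Rmin_l|apply Rmin_r]).
    assert (Hr3 : Cabs (Csub w z) < r) by (rewrite Hw; eapply Rlt_le_trans; [exact Hrl|]; apply Rmin_r).
    specialize (H1 w Hr1); specialize (H2 w Hr2).
    assert (Hz : Cabs (Csub z z) < r). { replace (Csub z z) with (RtoC 0) by (apply Cx_eq; destruct z; simpl; ring).
      rewrite Cabs_RtoC, Rabs_R0; lra. }
    rewrite (Heq w Hr3), (Heq z Hz) in H1.
    assert (E : Cmul (Csub d1 d2) (Csub w z) =
      Cadd (Csub (Csub (G w) (G z)) (Cmul d2 (Csub w z))) (Copp (Csub (Csub (G w) (G z)) (Cmul d1 (Csub w z))))) by ring.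
    pose proof (Cabs_triangle (Csub (Csub (G w) (G z)) (Cmul d2 (Csub w z))) (Copp (Csub (Csub (G w) (G z)) (Cmul d1 (Csub w z))))).
    rewrite <- E, Cabs_opp, Cabs_mul, Hw in H. rewrite Hw in H1, H2.
    pose proof (Cabs_ge0 (Csub d1 d2)).
    apply (Rmult_le_reg_r rho); [lra|]. lra. }
  assert (Z : Cabs (Csub d1 d2) = 0).
  { pose proof (Cabs_ge0 (Csub d1 d2)).
    destruct (Rle_lt_or_eq_dec _ _ H) as [h|h]; [|auto].
    specialize (Hk (Cabs (Csub d1 d2) / 4)). assert (0 < Cabs (Csub d1 d2) / 4) by lra.
    specialize (Hk H0). lra. }
  pose proof (Cabs_sq (Csub d1 d2)). rewrite Z in H.
  destruct d1 as [p1 q1], d2 as [p2 q2]; unfold Csub, Cadd, Copp in H; simpl in H.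
  replace ((p1 + - p2) * ((p1 + - p2) * 1) + (q1 + - q2) * ((q1 + - q2) * 1)) with ((p1-p2)^2 + (q1-q2)^2) in H by ring.
  pose proof (pow2_ge_0 (p1-p2)). pose proof (pow2_ge_0 (q1-q2)).
  assert ((p1 - p2)^2 = 0) by lra. assert ((q1 - q2)^2 = 0) by lra. clear H0 H1.
  rewrite <- Rsqr_pow2 in H2, H3. apply Rsqr_0_uniq in H2. apply Rsqr_0_uniq in H3.
  f_equal; lra.
Qed.


Definition c2 : Cx := Cadd C1 C1.
Definition Dr (a x y : R) := (2*x - a)^2 - 4*y^2 + (1 - a^2).
Definition Di (a x y : R) := 4*(2*x - a)*y.
Definition mm (a x y : R) := sqrt (Dr a x y ^ 2 + Di a x y ^ 2).
Definition al (a x y : R) := sqrt ((mm a x y + Dr a x y) / 2).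
Definition be (a x y : R) := Di a x y / (2 * al a x y).
Definition zp (a x y : R) : Cx := Cdiv (Cmul c2 (x, y)) (Cadd C1 (al a x y, be a x y)).
Definition Jset (a x y : R) := 0 < al a x y /\ Cabs (zp a x y) < 1.

Lemma mm_props a x y : mm a x y ^ 2 = Dr a x y ^ 2 + Di a x y ^ 2 /\ 0 <= mm a x y /\
  Rabs (Dr a x y) <= mm a x y.
Proof.
  unfold mm. split; [apply pow2_sqrt; nra|]. split; [apply sqrt_pos|].
  rewrite <- sqrt_Rsqr_abs. apply sqrt_le_1_alt. rewrite Rsqr_pow2. nra.
Qed.

Lemma al_props a x y : al a x y ^ 2 = (mm a x y + Dr a x y) / 2 /\ 0 <= al a x y.
Proof.
  destruct (mm_props a x y) as [H1 [H2 H3]].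
  assert (0 <= mm a x y + Dr a x y) by (pose proof (Rle_abs (- Dr a x y)); rewrite Rabs_Ropp in H; lra).
  unfold al; split; [apply pow2_sqrt; lra|apply sqrt_pos].
Qed.

Lemma be_props a x y : 0 < al a x y ->
  be a x y ^ 2 = al a x y ^ 2 - Dr a x y /\ 2 * al a x y * be a x y = Di a x y.
Proof.
  intro Hal. destruct (mm_props a x y) as [H1 [H2 H3]]. destruct (al_props a x y) as [A1 A2].
  unfold be. split; [|field_simplify; [reflexivity|lra]].
  apply (Rmult_eq_reg_r (4 * al a x y ^ 2)); [|nra].
  field_simplify; [|lra]. rewrite A1. 
  replace (Di a x y ^ 2) with (mm a x y ^ 2 - Dr a x y ^ 2) by lra. replace (al a x y ^ 4) with ((al a x y ^ 2)^2) by ring. rewrite A1. field.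
Qed.

Lemma psqrt_unique a x y u1 u2 : 0 < u1 -> u1^2 - u2^2 = Dr a x y -> 2*u1*u2 = Di a x y ->
  al a x y = u1 /\ be a x y = u2.
Proof.
  intros Hu E1 E2.
  assert (Hm : mm a x y = u1^2 + u2^2).
  { unfold mm. rewrite <- E1, <- E2. replace ((u1 ^ 2 - u2 ^ 2) ^ 2 + (2 * u1 * u2) ^ 2) with ((u1^2+u2^2)^2) by ring.
    apply sqrt_pow2. nra. }
  assert (Ha : al a x y = u1).
  { unfold al. rewrite Hm, <- E1. replace ((u1 ^ 2 + u2 ^ 2 + (u1 ^ 2 - u2 ^ 2)) / 2) with (u1^2) by field.
    apply sqrt_pow2; lra. }
  split; auto. unfold be. rewrite Ha, <- E2. field. lra.
Qed.

Lemma vsq a x y : 0 < al a x y ->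
  Cmul (al a x y, be a x y) (al a x y, be a x y) =
  Cadd C1 (Csub (Cmul (Cmul c2 c2) (Cmul (x,y) (x,y))) (Cmul (Cmul c2 c2) (Cmul (RtoC a) (x,y)))).
Proof.
  intro H. destruct (be_props a x y H) as [B1 B2].
  unfold Dr, Di in *. apply Cx_eq; unfold Cmul, Cadd, Csub, Copp, c2, C1, RtoC; simpl.
  - replace (al a x y * al a x y - be a x y * be a x y) with (al a x y ^2 - be a x y ^ 2) by ring. rewrite B1. ring.
  - lra.
Qed.


Lemma Cabs_C1 : Cabs C1 = 1.
Proof. replace C1 with (RtoC 1) by reflexivity. rewrite Cabs_RtoC. apply Rabs_R1. Qed.

Lemma Cabs_lt1 z : Cabs z < 1 <-> fst z ^ 2 + snd z ^ 2 < 1.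
Proof. rewrite <- Cabs_C1 at 1. rewrite Cabs_lt_iff. unfold C1; simpl. replace (1 * (1 * 1) + 0 * (0 * 1)) with 1 by ring. tauto. Qed.

Lemma Cabs_lt1_ne (z : Cx) : Cabs z < 1 -> Csub C1 (Cmul z z) <> C0.
Proof.
  intros H E. assert (Cmul z z = C1).
  { replace (Cmul z z) with (Csub C1 (Csub C1 (Cmul z z))) by ring. rewrite E. apply Cx_eq; unfold C1, C0, Csub, Cadd, Copp; simpl; ring. }
  pose proof (Cabs_mul z z). rewrite H0 in H1. replace C1 with (RtoC 1) in H1 by reflexivity. rewrite (Cabs_RtoC 1) in H1.
  rewrite Rabs_R1 in H1. pose proof (Cabs_ge0 z). nra.
Qed.

Lemma one_plus_ne (v : Cx) : 0 <= fst v -> Cadd C1 v <> C0.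
Proof. intros H E. unfold C0, C1, Cadd in E. injection E; intros; lra. Qed.

Lemma shear_num_eq a w z : Csub C1 (Cmul z z) <> C0 ->
  Cmul z (Csub C1 (Cmul (RtoC a) z)) = Cmul w (Csub C1 (Cmul z z)) -> shear_sum a z = w.
Proof. intros Hd E. unfold shear_sum. rewrite E. field. auto. Qed.

Lemma zp_solves a x y : Jset a x y -> shear_sum a (zp a x y) = (x, y).
Proof.
  intros [Hal Hz]. apply shear_num_eq; [apply Cabs_lt1_ne; auto|].
  pose proof (vsq a x y Hal) as V.
  set (v := (al a x y, be a x y)) in *. set (w := (x,y)) in *.
  assert (Hv : Cadd C1 v <> C0) by (apply one_plus_ne; unfold v; simpl; lra).
  unfold zp; fold v; fold w.
  set (z := Cdiv (Cmul c2 w) (Cadd C1 v)).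
  assert (K : Csub (Cmul z (Csub C1 (Cmul (RtoC a) z))) (Cmul w (Csub C1 (Cmul z z))) =
     Cdiv (Cmul w (Csub (Cadd C1 (Csub (Cmul (Cmul c2 c2) (Cmul w w)) (Cmul (Cmul c2 c2) (Cmul (RtoC a) w)))) (Cmul v v)))
          (Cmul (Cadd C1 v) (Cadd C1 v))).
  { unfold z, c2. field. auto. }
  rewrite V in K. replace (Csub (Cadd C1 (Csub (Cmul (Cmul c2 c2) (Cmul w w)) (Cmul (Cmul c2 c2) (Cmul (RtoC a) w))))
       (Cadd C1 (Csub (Cmul (Cmul c2 c2) (Cmul w w)) (Cmul (Cmul c2 c2) (Cmul (RtoC a) w))))) with C0 in K by ring.
  replace (Cdiv (Cmul w C0) (Cmul (Cadd C1 v) (Cadd C1 v))) with C0 in K by (field; auto).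
  replace (Cmul z (Csub C1 (Cmul (RtoC a) z))) with
    (Cadd (Csub (Cmul z (Csub C1 (Cmul (RtoC a) z))) (Cmul w (Csub C1 (Cmul z z)))) (Cmul w (Csub C1 (Cmul z z)))) by ring.
  rewrite K. ring.
Qed.

Lemma fst_Cdiv N d : d <> C0 -> fst (Cdiv N d) = (fst N * fst d + snd N * snd d) / (fst d ^ 2 + snd d ^ 2).
Proof.
  intro H. pose proof (Cabs_pos d H). pose proof (Cabs_sq d).
  unfold Cdiv, Cmul, Cinv; simpl. field. nra.
Qed.

Lemma pos_ident (a p q : R) :
  2 * ((1 - 2*a*p + (p*p - q*q)) * (1 - (p*p - q*q)) + (- 2*a*q + 2*p*q) * (- 2*p*q)) =
  (1 - p^2 - q^2) * ((1 - a) * ((1+p)^2 + q^2) + (1 + a) * ((1-p)^2 + q^2)).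
Proof. ring. Qed.

Lemma zp_preimage a x y z : -1 <= a <= 1 -> Cabs z < 1 -> shear_sum a z = (x,y) ->
  Jset a x y /\ zp a x y = z.
Proof.
  intros Ha Hz Hs.
  set (w := (x,y)) in *.
  set (den := Csub C1 (Cmul z z)).
  assert (Hden : den <> C0) by (apply Cabs_lt1_ne; auto).
  set (num := Cmul z (Csub C1 (Cmul (RtoC a) z))).
  assert (P : num = Cmul w den).
  { rewrite <- Hs. unfold shear_sum. fold num den. field. auto. }
  set (u := Cadd (Cmul c2 (Cmul (Csub w (RtoC a)) z)) C1).
  assert (U2 : Cmul u u = Cadd C1 (Csub (Cmul (Cmul c2 c2) (Cmul w w)) (Cmul (Cmul c2 c2) (Cmul (RtoC a) w)))).
  { replace (Cmul u u) with (Cadd (Cadd C1 (Csub (Cmul (Cmul c2 c2) (Cmul w w)) (Cmul (Cmul c2 c2) (Cmul (RtoC a) w))))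
       (Cmul (Cmul (Cmul c2 c2) (Csub w (RtoC a))) (Csub num (Cmul w den)))) by (unfold u, num, den, c2; ring).
    rewrite P. ring. }
  set (N := Cadd (Csub C1 (Cmul (Cmul c2 (RtoC a)) z)) (Cmul z z)).
  assert (UN : Cmul u den = N).
  { replace (Cmul u den) with (Cadd N (Cmul (Cmul c2 z) (Csub (Cmul w den) num))) by (unfold u, num, den, N, c2; ring).
    rewrite P. ring. }
  assert (Hu1 : 0 < fst u).
  { assert (E : u = Cdiv N den) by (rewrite <- UN; field; auto).
    rewrite E, (fst_Cdiv N den Hden). destruct z as [p q].
    assert (Hpq : p^2 + q^2 < 1).
    { apply Cabs_lt1 in Hz. simpl in Hz. lra. }
    apply Rdiv_lt_0_compat.
    2:{ apply Cabs_pos in Hden. pose proof (Cabs_sq den). nra. }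
    unfold N, den, Cmul, Csub, Cadd, Copp, C1, c2, RtoC; simpl.
    pose proof (pos_ident a p q) as PI.
    assert (0 < (1 - p^2 - q^2) * ((1 - a) * ((1+p)^2 + q^2) + (1 + a) * ((1-p)^2 + q^2))).
    { apply Rmult_lt_0_compat; [lra|].
      assert (A1 : 0 < (1+p)^2 + q^2) by nra. assert (A2 : 0 < (1-p)^2 + q^2) by nra.
      destruct (Rle_dec a 0).
      + assert (0 < (1 - a) * ((1+p)^2 + q^2)) by (apply Rmult_lt_0_compat; lra).
        assert (0 <= (1 + a) * ((1-p)^2 + q^2)) by (apply Rmult_le_pos; lra). lra.
      + assert (0 <= (1 - a) * ((1+p)^2 + q^2)) by (apply Rmult_le_pos; lra).
        assert (0 < (1 + a) * ((1-p)^2 + q^2)) by (apply Rmult_lt_0_compat; lra). lra. }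
    match goal with |- 0 < ?G => replace G with ((1 - 2*a*p + (p*p - q*q)) * (1 - (p*p - q*q)) + (- 2*a*q + 2*p*q) * (- 2*p*q)) by ring end.
    lra. }
  assert (Hu : al a x y = fst u /\ be a x y = snd u).
  { apply psqrt_unique; auto.
    - assert (E := f_equal fst U2). unfold Dr. destruct u as [u1 u2]; simpl in *.
      unfold Cmul, Cadd, Csub, Copp, c2, C1, RtoC, w in E; simpl in E. nra.
    - assert (E := f_equal snd U2). unfold Di. destruct u as [u1 u2]; simpl in *.
      unfold Cmul, Cadd, Csub, Copp, c2, C1, RtoC, w in E; simpl in E. nra. }
  assert (Hv : (al a x y, be a x y) = u) by (destruct Hu as [-> ->]; destruct u; reflexivity).
  assert (Hzp : zp a x y = z).
  { unfold zp. rewrite Hv. fold w.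
    assert (Hu0 : Cadd C1 u <> C0) by (apply one_plus_ne; lra).
    assert (Z : Cmul z (Cadd C1 u) = Cmul c2 w).
    { replace (Cmul z (Cadd C1 u)) with (Cadd (Cmul c2 w) (Cmul c2 (Csub num (Cmul w den)))) by (unfold u, num, den, c2; ring).
      rewrite P. ring. }
    rewrite <- Z. field. auto. }
  split; [split; [destruct Hu as [-> _]; auto| rewrite Hzp; auto] | auto].
Qed.


Lemma J_char a x y : Jset a x y <-> 0 < al a x y /\ 2*x*(2*x - a) < al a x y ^ 2 + al a x y.
Proof.
  assert (key : 0 < al a x y -> (Cabs (zp a x y) < 1 <-> 2*x*(2*x - a) < al a x y ^ 2 + al a x y)).
  { intro Hal. destruct (be_props a x y Hal) as [B1 B2].
    assert (Hv : Cadd C1 (al a x y, be a x y) <> C0) by (apply one_plus_ne; simpl; lra).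
    pose proof (Cabs_pos _ Hv).
    unfold zp. rewrite Cabs_div by auto.
    split; intro H'.
    - assert (Cabs (Cmul c2 (x,y)) < Cabs (Cadd C1 (al a x y, be a x y))).
      { apply (Rmult_lt_reg_r (/ Cabs (Cadd C1 (al a x y, be a x y)))). apply Rinv_0_lt_compat; auto.
        rewrite Rinv_r by lra. exact H'. }
      apply Cabs_lt_iff in H0. unfold c2, Cmul, Cadd, C1 in H0; simpl in H0.
      unfold Dr in B1. nra.
    - assert (Cabs (Cmul c2 (x,y)) < Cabs (Cadd C1 (al a x y, be a x y))).
      { apply Cabs_lt_iff. unfold c2, Cmul, Cadd, C1; simpl. unfold Dr in B1. nra. }
      apply (Rmult_lt_reg_r (Cabs (Cadd C1 (al a x y, be a x y)))); auto.
      unfold Rdiv. rewrite Rmult_assoc, Rinv_l by lra. lra. }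
  unfold Jset; split; intros [H1 H2]; split; auto; apply key; auto.
Qed.

Lemma al_mono a x y y' : -1 <= a <= 1 -> y^2 <= y'^2 -> al a x y' <= al a x y.
Proof.
  intros Ha Hy. unfold al. apply sqrt_le_1_alt.
  assert (mm a x y' <= mm a x y + (4*y'^2 - 4*y^2)).
  { pose proof (mm_props a x y) as [M1 [M2 M3]].
    unfold mm at 1. apply sqrt_le_of; [lra|].
    set (Xp := 2*x - a) in *. set (c := 1 - a^2) in *.
    assert (Hc : 0 <= c) by (unfold c; nra).
    assert (E1 : Dr a x y' ^ 2 + Di a x y' ^ 2 = (4*y'^2 + Xp^2 - c)^2 + 4*Xp^2*c) by (unfold Dr, Di; fold Xp c; ring).
    assert (E2 : mm a x y ^ 2 = (4*y^2 + Xp^2 - c)^2 + 4*Xp^2*c) by (rewrite M1; unfold Dr, Di; fold Xp c; ring).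
    rewrite E1.
    assert (U : 4*y^2 + Xp^2 - c <= mm a x y).
    { destruct (Rle_dec (4*y^2 + Xp^2 - c) 0); [lra|].
      assert (0 <= 4*Xp^2*c) by (apply Rmult_le_pos; nra). nra. }
    set (u := 4*y^2 + Xp^2 - c) in *. set (d := 4*y'^2 - 4*y^2).
    replace (4 * y' ^ 2 + Xp ^ 2 - c) with (u + d) by (unfold u, d; ring).
    assert (0 <= d) by (unfold d; lra).
    assert (u * d <= mm a x y * d) by (apply Rmult_le_compat_r; auto).
    nra. }
  unfold Dr in *. lra.
Qed.

Lemma J_interval a x y1 y2 y : -1 <= a <= 1 -> Jset a x y1 -> Jset a x y2 -> y1 <= y <= y2 -> Jset a x y.
Proof.
  intros Ha H1 H2 Hy. apply J_char in H1; apply J_char in H2. apply J_char.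
  assert (exists yj, (0 < al a x yj /\ 2*x*(2*x - a) < al a x yj ^ 2 + al a x yj) /\ y^2 <= yj^2) as [yj [Hj Hyj]].
  { destruct (Rle_dec 0 y).
    - exists y2; split; auto. nra.
    - exists y1; split; auto. nra. }
  pose proof (al_mono a x y yj Ha Hyj). destruct Hj. split; [lra|nra].
Qed.


Lemma mm_pos a x y0 : 0 < al a x y0 -> 0 < Dr a x y0 ^ 2 + Di a x y0 ^ 2.
Proof.
  intro H. destruct (al_props a x y0) as [A1 A2]. destruct (mm_props a x y0) as [M1 [M2 M3]].
  destruct (Rle_lt_or_eq_dec 0 (Dr a x y0 ^ 2 + Di a x y0 ^ 2)) as [h|h]; [nra|auto|].
  exfalso. assert (mm a x y0 = 0) by (unfold mm; rewrite <- h; apply sqrt_0).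
  pose proof (Rle_abs (Dr a x y0)). rewrite H0 in A1, M3. nra.
Qed.

Lemma al_ex_derive a x y0 : 0 < al a x y0 -> ex_derive (fun y => al a x y) y0.
Proof.
  intro H. pose proof (mm_pos a x y0 H) as H0. destruct (al_props a x y0) as [A1 A2].
  assert (H1 : 0 < (mm a x y0 + Dr a x y0) / 2) by (rewrite <- A1; nra).
  clear A1 A2 H. unfold al, mm, Dr, Di in *.
  auto_derive. unfold Rdiv in H1. repeat split; try nra.
  eapply Rlt_le_trans; [exact H1|]; right. f_equal.
Qed.

Lemma zp_ex_derive a x y0 : 0 < al a x y0 ->
  ex_derive (fun y => fst (zp a x y)) y0 /\ ex_derive (fun y => snd (zp a x y)) y0.
Proof.
  intro H. pose proof (al_ex_derive a x y0 H) as Hd.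
  unfold zp, Cdiv, Cmul, Cinv, Cadd, c2, C1, be, Di; simpl.
  split; auto_derive; repeat split; auto;
  try lra; match goal with |- ?A * (?A * 1) + ?B * (?B * 1) <> 0 =>
     assert (0 < A) by lra; assert (0 <= B * (B * 1)) by (rewrite Rmult_1_r; apply Rle_0_sqr);
     assert (0 < A * (A * 1)) by (rewrite Rmult_1_r; apply Rmult_lt_0_compat; lra); lra end.
Qed.

Lemma cont_ed (f : R -> R) x0 : ex_derive f x0 ->
  forall e, 0 < e -> exists d, 0 < d /\ forall y, Rabs (y - x0) < d -> Rabs (f y - f x0) < e.
Proof.
  intros Hd e He. apply ex_derive_continuous in Hd.
  assert (Hc : continuity_pt f x0) by (apply continuity_pt_filterlim; exact Hd).
  destruct (Hc e He) as [d [Hd0 Hdd]]. exists d; split; auto.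
  intros y Hy. destruct (Req_dec y x0) as [->|Hne].
  - unfold Rminus; rewrite Rplus_opp_r, Rabs_R0; auto.
  - apply (Hdd y). split; [split; [exact I| auto]|]. exact Hy.
Qed.

Lemma zp_cont a x y0 : 0 < al a x y0 ->
  forall e, 0 < e -> exists d, 0 < d /\ forall y, Rabs (y - y0) < d -> Cabs (Csub (zp a x y) (zp a x y0)) < e.
Proof.
  intros H e He. destruct (zp_ex_derive a x y0 H) as [D1 D2].
  destruct (cont_ed _ _ D1 (e/2)) as [d1 [Hd1 H1]]; [lra|].
  destruct (cont_ed _ _ D2 (e/2)) as [d2 [Hd2 H2]]; [lra|].
  exists (Rmin d1 d2); split; [apply Rmin_glb_lt; auto|]. intros y Hy.
  eapply Rle_lt_trans; [apply Cabs_le_sum|].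
  assert (Rabs (y - y0) < d1) by (eapply Rlt_le_trans; [exact Hy|apply Rmin_l]).
  assert (Rabs (y - y0) < d2) by (eapply Rlt_le_trans; [exact Hy|apply Rmin_r]).
  specialize (H1 y H0). specialize (H2 y H3).
  assert (Rabs (fst (Csub (zp a x y) (zp a x y0))) < e/2) by exact H1.
  assert (Rabs (snd (Csub (zp a x y) (zp a x y0))) < e/2) by exact H2. lra.
Qed.

Lemma J_open a x y0 : Jset a x y0 -> exists d, 0 < d /\ forall y, Rabs (y - y0) < d -> Jset a x y.
Proof.
  intros [Hal Hz].
  destruct (cont_ed _ _ (al_ex_derive a x y0 Hal) (al a x y0)) as [d1 [Hd1 H1]]; auto.
  destruct (zp_cont a x y0 Hal (1 - Cabs (zp a x y0))) as [d2 [Hd2 H2]]; [lra|].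
  exists (Rmin d1 d2); split; [apply Rmin_glb_lt; auto|]. intros y Hy.
  assert (Rabs (y - y0) < d1) by (eapply Rlt_le_trans; [exact Hy|apply Rmin_l]).
  assert (Rabs (y - y0) < d2) by (eapply Rlt_le_trans; [exact Hy|apply Rmin_r]).
  specialize (H1 y H). specialize (H2 y H0). split.
  - pose proof (Rle_abs (- (al a x y - al a x y0))). rewrite Rabs_Ropp in H3. lra.
  - replace (zp a x y) with (Cadd (zp a x y0) (Csub (zp a x y) (zp a x y0))) by ring.
    eapply Rle_lt_trans; [apply Cabs_triangle|]. lra.
Qed.


Lemma deriv_path (Hf Gf : Cx -> Cx) (S G' : Cx) (zp : R -> Cx) (x y0 d0 : R) :
  has_cderiv Hf (zp y0) S -> has_cderiv Gf (zp y0) G' -> S <> C0 -> 0 < d0 ->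
  (forall y, Rabs (y - y0) < d0 -> Hf (zp y) = (x, y)) ->
  (forall e, 0 < e -> exists d, 0 < d /\ forall y, Rabs (y - y0) < d -> Cabs (Csub (zp y) (zp y0)) < e) ->
  derivable_pt_lim (fun y => snd (Gf (zp y))) y0 (snd (Cdiv (Cmul G' (0,1)) S)).
Proof.
  intros DH DG HS Hd0 Hval Hcont eps Heps.
  set (s := Cabs S). set (g := Cabs G').
  assert (Hs : 0 < s) by (apply Cabs_pos; auto).
  assert (Hg : 0 <= g) by apply Cabs_ge0.
  set (e1 := Rmin (s/2) (eps * s^2 / (8 * (g+1)))).
  set (e2 := eps * s / 8).
  assert (He1 : 0 < e1) by (unfold e1; apply Rmin_glb_lt; [lra| apply Rdiv_lt_0_compat; [apply Rmult_lt_0_compat; [lra|apply pow_lt; lra]|lra]]).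
  assert (He1a : e1 <= s/2) by apply Rmin_l.
  assert (He1b : e1 <= eps * s^2 / (8 * (g+1))) by apply Rmin_r.
  assert (He2 : 0 < e2) by (unfold e2; apply Rdiv_lt_0_compat; [apply Rmult_lt_0_compat|]; lra).
  destruct (DH e1 He1) as [d1 [Hd1 H1]].
  destruct (DG e2 He2) as [d2 [Hd2 H2]].
  destruct (Hcont (Rmin d1 d2)) as [dc [Hdc Hc]]; [apply Rmin_glb_lt; auto|].
  assert (Hdel : 0 < Rmin d0 dc) by (apply Rmin_glb_lt; auto).
  exists (mkposreal _ Hdel). intros h Hh0 Hh. simpl in Hh.
  assert (Hy0 : Rabs (y0 + h - y0) < d0) by (replace (y0 + h - y0) with h by ring; eapply Rlt_le_trans; [exact Hh|apply Rmin_l]).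
  assert (Hyc : Rabs (y0 + h - y0) < dc) by (replace (y0 + h - y0) with h by ring; eapply Rlt_le_trans; [exact Hh|apply Rmin_r]).
  set (z := zp (y0 + h)) in *. set (z0 := zp y0) in *.
  set (d := Csub z z0).
  specialize (Hc _ Hyc). fold z d in Hc.
  assert (Hdd1 : Cabs d < d1) by (eapply Rlt_le_trans; [exact Hc|apply Rmin_l]).
  assert (Hdd2 : Cabs d < d2) by (eapply Rlt_le_trans; [exact Hc|apply Rmin_r]).
  specialize (H1 z Hdd1). specialize (H2 z Hdd2). fold d in H1, H2.
  assert (Hzz : Hf z = (x, y0 + h)) by (apply Hval; auto). rewrite Hzz in H1.
  assert (Hz0 : Hf z0 = (x, y0)).
  { unfold z0. apply Hval. unfold Rminus; rewrite Rplus_opp_r, Rabs_R0; auto. }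
  rewrite Hz0 in H1.
  replace (Csub (x, y0 + h) (x, y0)) with (0, h) in H1 by (unfold Csub, Cadd, Copp; simpl; f_equal; ring).
  set (T := Csub (0, h) (Cmul S d)) in *.
  set (U := Csub (Csub (Gf z) (Gf z0)) (Cmul G' d)) in *.
  pose proof (Cabs_ge0 d) as Hdpos.
  assert (Hdb : Cabs d * s <= 2 * Rabs h).
  { assert (E : Cmul S d = Cadd (0, h) (Copp T)) by (unfold T; ring).
    pose proof (Cabs_triangle (0,h) (Copp T)). rewrite <- E, Cabs_mul, Cabs_opp, Cabs_imag in H.
    fold s in H. nra. }
  set (e := Cdiv (0, h) S).
  assert (Hde : Cabs (Csub d e) * s <= e1 * Cabs d).
  { assert (E : Cmul (Csub d e) S = Copp T) by (unfold e, T; field; auto).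
    pose proof (f_equal Cabs E). rewrite Cabs_mul, Cabs_opp in H. fold s in H. lra. }
  assert (EG : Csub (Csub (Gf z) (Gf z0)) (Cmul (RtoC h) (Cdiv (Cmul G' (0,1)) S)) =
               Cadd U (Cmul G' (Csub d e))).
  { assert (Cmul (RtoC h) (Cdiv (Cmul G' (0,1)) S) = Cmul G' e).
    { unfold e. replace ((0,h) : Cx) with (Cmul (RtoC h) (0,1)) by (unfold RtoC, Cmul; simpl; f_equal; ring).
      field. auto. }
    rewrite H. unfold U. ring. }
  assert (Hbound : Cabs (Cadd U (Cmul G' (Csub d e))) <= eps * Rabs h / 2).
  { eapply Rle_trans; [apply Cabs_triangle|]. rewrite Cabs_mul. fold g.
    assert (A1 : g * Cabs (Csub d e) * s <= g * e1 * Cabs d) by nra.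
    assert (A2 : Cabs U * s <= e2 * Cabs d * s) by nra.
    assert (A3 : (e2 * Cabs d + g * e1 * Cabs d / s) * s <= eps * Rabs h / 2 * s).
    { assert (B1 : e2 * Cabs d * s <= e2 * 2 * Rabs h) by nra.
      assert (B2 : g * e1 * Cabs d <= g * e1 * (2 * Rabs h / s)).
      { apply Rmult_le_compat_l; [nra|]. apply (Rmult_le_reg_r s); auto. field_simplify; lra. }
      assert (B3 : g * e1 * (2 * Rabs h / s) * s = 2 * g * e1 * Rabs h) by (field; lra).
      assert (B4 : 2 * g * e1 <= eps * s^2 / 4).
      { assert (g * (eps * s ^ 2 / (8 * (g + 1))) <= eps * s^2 / 8).
        { apply (Rmult_le_reg_r (8 * (g+1))); [lra|]. field_simplify; [|lra]. nra. }
        nra. }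
      pose proof (Rabs_pos h).
      replace ((e2 * Cabs d + g * e1 * Cabs d / s) * s) with (e2 * Cabs d * s + g * e1 * Cabs d) by (field; lra).
      unfold e2 in *. nra. }
    apply (Rmult_le_reg_r s); auto.
    replace ((Cabs U + g * Cabs (Csub d e)) * s) with (Cabs U * s + g * Cabs (Csub d e) * s) by ring.
    replace ((e2 * Cabs d + g * e1 * Cabs d / s) * s) with (e2 * Cabs d * s + g * e1 * Cabs d) in A3 by (field; lra).
    lra. }
  rewrite <- EG in Hbound.
  pose proof (Cabs_snd (Csub (Csub (Gf z) (Gf z0)) (Cmul (RtoC h) (Cdiv (Cmul G' (0, 1)) S)))) as Hsn.
  set (K := snd (Cdiv (Cmul G' (0, 1)) S)) in *.
  assert (Esn : snd (Csub (Csub (Gf z) (Gf z0)) (Cmul (RtoC h) (Cdiv (Cmul G' (0, 1)) S))) =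
     snd (Gf z) - snd (Gf z0) - h * K) by (unfold K, Csub, Cadd, Copp, Cmul, RtoC; simpl; ring).
  rewrite Esn in Hsn.
  assert (Hh1 : 0 < Rabs h) by (apply Rabs_pos_lt; auto).
  replace ((snd (Gf z) - snd (Gf z0)) / h - K) with ((snd (Gf z) - snd (Gf z0) - h * K) / h) by (field; auto).
  unfold Rdiv; rewrite Rabs_mult, Rabs_inv.
  apply (Rmult_lt_reg_r (Rabs h)); auto. rewrite Rmult_assoc, Rinv_l by (apply Rgt_not_eq; lra). assert (0 < eps * Rabs h) by (apply Rmult_lt_0_compat; lra). lra.
Qed.


Lemma K_pos (hp gp : Cx) : Cabs gp < Cabs hp ->
  0 < snd (Cdiv (Cmul (Csub hp gp) (0,1)) (Cadd hp gp)) /\ Cadd hp gp <> C0.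
Proof.
  intro H. apply Cabs_lt_iff in H.
  assert (HS : Cadd hp gp <> C0).
  { intro E. assert (gp = Copp hp).
    { replace gp with (Csub (Cadd hp gp) hp) by ring. rewrite E. ring. }
    subst gp. unfold Copp in H; simpl in H. lra. }
  split; auto.
  pose proof (Cabs_pos _ HS). pose proof (Cabs_sq (Cadd hp gp)).
  destruct hp as [a1 b1], gp as [a2 b2]. simpl in *.
  unfold Cdiv, Cmul, Cinv, Csub, Cadd, Copp in *; simpl in *.
  replace ((a1 + - a2) * 0 - (b1 + - b2) * 1) with (b2 - b1) by ring.
  replace ((a1 + - a2) * 1 + (b1 + - b2) * 0) with (a1 - a2) by ring.
  set (N := (a1 + a2) ^ 2 + (b1 + b2) ^ 2).
  assert (HN : 0 < N) by (unfold N; nra).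
  assert (HN' : (a1 + a2) * ((a1 + a2) * 1) + (b1 + b2) * ((b1 + b2) * 1) <> 0) by (unfold N in HN; apply Rgt_not_eq; nra).
  match goal with |- 0 < ?G => replace G with ((a1^2 + b1^2 - a2^2 - b2^2) / N) by (unfold N in *; field; repeat split; try exact HN'; apply Rgt_not_eq; nra) end.
  apply Rdiv_lt_0_compat; nra.
Qed.

Section Shear.
Variables (a : R) (h g h' g' : Cx -> Cx).
Hypothesis Ha : -1 <= a <= 1.
Hypothesis Hd : forall z, inE z -> has_cderiv h z (h' z) /\ has_cderiv g z (g' z).
Hypothesis Hlt : forall z, inE z -> Cabs (g' z) < Cabs (h' z).
Hypothesis Hs : forall z, inE z -> Cadd (h z) (g z) = shear_sum a z.

Definition Fx (x y : R) := snd (Csub (h (zp a x y)) (g (zp a x y))).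
Definition Kx (x y : R) := snd (Cdiv (Cmul (Csub (h' (zp a x y)) (g' (zp a x y))) (0,1))
                                     (Cadd (h' (zp a x y)) (g' (zp a x y)))).

Lemma Fx_deriv x y0 : Jset a x y0 -> derivable_pt_lim (Fx x) y0 (Kx x y0).
Proof.
  intro J. destruct (J_open a x y0 J) as [d0 [Hd0 Hop]].
  pose proof J as [Hal Hin].
  destruct (Hd _ Hin) as [D1 D2].
  destruct (K_pos _ _ (Hlt _ Hin)) as [_ HS].
  unfold Fx, Kx.
  apply (deriv_path (fun w => Cadd (h w) (g w)) (fun w => Csub (h w) (g w))
     (Cadd (h' (zp a x y0)) (g' (zp a x y0))) (Csub (h' (zp a x y0)) (g' (zp a x y0)))
     (zp a x) x y0 d0).
  - apply deriv_add; auto.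
  - apply (deriv_add h (fun w => Copp (g w))); auto. apply deriv_opp; auto.
  - auto.
  - auto.
  - intros y Hy. specialize (Hop y Hy). rewrite Hs by (destruct Hop; auto). apply zp_solves; auto.
  - apply zp_cont; auto.
Qed.

Lemma Fx_incr x y1 y2 : Jset a x y1 -> Jset a x y2 -> y1 < y2 -> Fx x y1 < Fx x y2.
Proof.
  intros J1 J2 Hy.
  destruct (MVT_cor2 (Fx x) (Kx x) y1 y2 Hy) as [c [Ec Hc]].
  { intros c Hc. apply Fx_deriv. apply (J_interval a x y1 y2 c); auto. }
  assert (Jc : Jset a x c) by (apply (J_interval a x y1 y2 c); auto; lra).
  destruct Jc as [_ Hin]. destruct (K_pos _ _ (Hlt _ Hin)) as [HK _].
  fold (Kx x c) in HK. nra.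
Qed.

Lemma fst_harm z : inE z -> fst (harm h g z) = fst (shear_sum a z).
Proof. intro Hz. rewrite <- Hs by auto. unfold harm, Cadd, Cconj; simpl. ring. Qed.

Lemma snd_harm x y : snd (harm h g (zp a x y)) = Fx x y.
Proof. unfold harm, Fx, Cadd, Csub, Cconj, Copp; simpl. ring. Qed.

Lemma preim z : inE z ->
  Jset a (fst (shear_sum a z)) (snd (shear_sum a z)) /\ zp a (fst (shear_sum a z)) (snd (shear_sum a z)) = z.
Proof.
  intros Hz. apply zp_preimage; auto.
Qed.

Lemma shear_univalent : forall z w, inE z -> inE w -> harm h g z = harm h g w -> z = w.
Proof.
  intros z w Hz Hw E.
  assert (Ex : fst (shear_sum a z) = fst (shear_sum a w)) by (rewrite <- !fst_harm, E; auto).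
  destruct (preim z Hz) as [J1 Z1]. destruct (preim w Hw) as [J2 Z2].
  rewrite Ex in J1, Z1.
  set (x := fst (shear_sum a w)) in *.
  assert (EF : Fx x (snd (shear_sum a z)) = Fx x (snd (shear_sum a w))).
  { rewrite <- !snd_harm, Z1, Z2, E. reflexivity. }
  destruct (Rtotal_order (snd (shear_sum a z)) (snd (shear_sum a w))) as [L|[L|L]].
  - pose proof (Fx_incr x _ _ J1 J2 L). lra.
  - rewrite <- Z1, <- Z2, L. reflexivity.
  - pose proof (Fx_incr x _ _ J2 J1 L). lra.
Qed.

Lemma shear_convex : convex_imag (imageE (harm h g)).
Proof.
  intros x Y1 Y2 Y HY [z1 [Hz1 E1]] [z2 [Hz2 E2]].
  destruct (preim z1 Hz1) as [J1 Z1]. destruct (preim z2 Hz2) as [J2 Z2].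
  assert (X1 : fst (shear_sum a z1) = x) by (rewrite <- fst_harm, E1; auto).
  assert (X2 : fst (shear_sum a z2) = x) by (rewrite <- fst_harm, E2; auto).
  rewrite X1 in J1, Z1. rewrite X2 in J2, Z2.
  set (y1 := snd (shear_sum a z1)) in *. set (y2 := snd (shear_sum a z2)) in *.
  assert (F1 : Fx x y1 = Y1) by (rewrite <- snd_harm, Z1, E1; reflexivity).
  assert (F2 : Fx x y2 = Y2) by (rewrite <- snd_harm, Z2, E2; reflexivity).
  destruct (Req_dec Y Y1) as [->|N1]; [exists z1; auto|].
  destruct (Req_dec Y Y2) as [->|N2]; [exists z2; auto|].
  assert (LY1 : Y1 < Y) by (destruct HY as [HY1 _]; destruct (Rle_lt_or_eq_dec _ _ HY1) as [|e]; [auto| exfalso; apply N1; symmetry; exact e]).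
  assert (LY2 : Y < Y2) by (destruct HY as [_ HY2]; destruct (Rle_lt_or_eq_dec _ _ HY2) as [|e]; [auto| exfalso; apply N2; exact e]).
  destruct (Rtotal_order y1 y2) as [L|[L|L]].
  - assert (Hc : forall t, y1 <= t <= y2 -> continuity_pt (fun t => Fx x t - Y) t).
    { intros t Ht. apply continuity_pt_minus; [|apply continuity_pt_const; intros u v; reflexivity].
      apply derivable_continuous_pt. exists (Kx x t). apply Fx_deriv.
      apply (J_interval a x y1 y2 t); auto. }
    destruct (Ranalysis5.IVT_interv (fun t => Fx x t - Y) y1 y2 Hc L) as [t [Ht Ft]]; [lra|lra|].
    assert (Jt : Jset a x t) by (apply (J_interval a x y1 y2 t); auto).
    exists (zp a x t). split; [destruct Jt; auto|].
    apply Cx_eq; change (fst (x, Y)) with x; change (snd (x, Y)) with Y.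
    + rewrite fst_harm by (destruct Jt; auto). rewrite zp_solves; auto.
    + rewrite snd_harm. cbv beta in Ft. lra.
  - exfalso. rewrite L in F1. lra.
  - pose proof (Fx_incr x _ _ J2 J1 L). lra.
Qed.

End Shear.


Lemma mix_ineq t S u1 u2 : 0 <= t <= 1 -> Cabs (Csub S u1) < Cabs u1 -> Cabs (Csub S u2) < Cabs u2 ->
  Cabs (Csub S (Cadd (Cmul (RtoC t) u1) (Cmul (RtoC (1 - t)) u2))) <
  Cabs (Cadd (Cmul (RtoC t) u1) (Cmul (RtoC (1 - t)) u2)).
Proof.
  intros Ht H1 H2. apply Cabs_lt_iff in H1; apply Cabs_lt_iff in H2; apply Cabs_lt_iff.
  destruct S as [s1 s2], u1 as [p1 q1], u2 as [p2 q2].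
  unfold Csub, Cadd, Copp, Cmul, RtoC in *; simpl in *.
  assert (E1 : 0 < 2*(s1*p1 + s2*q1) - (s1^2 + s2^2)) by nra.
  assert (E2 : 0 < 2*(s1*p2 + s2*q2) - (s1^2 + s2^2)) by nra.
  assert (0 <= t * (2*(s1*p1 + s2*q1) - (s1^2 + s2^2))) by (apply Rmult_le_pos; lra).
  assert (0 <= (1-t) * (2*(s1*p2 + s2*q2) - (s1^2 + s2^2))) by (apply Rmult_le_pos; lra).
  assert (0 < t * (2*(s1*p1 + s2*q1) - (s1^2 + s2^2)) + (1-t) * (2*(s1*p2 + s2*q2) - (s1^2 + s2^2))).
  { destruct (Rle_dec t (1/2)).
    - assert (0 < (1-t) * (2*(s1*p2 + s2*q2) - (s1^2 + s2^2))) by (apply Rmult_lt_0_compat; lra). lra.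
    - assert (0 < t * (2*(s1*p1 + s2*q1) - (s1^2 + s2^2))) by (apply Rmult_lt_0_compat; lra). lra. }
  match goal with |- ?A < ?B => assert (B - A = t * (2*(s1*p1 + s2*q1) - (s1^2 + s2^2)) + (1-t) * (2*(s1*p2 + s2*q2) - (s1^2 + s2^2))) by ring end.
  lra.
Qed.

Lemma Cabs_C0 : Cabs C0 = 0.
Proof. replace C0 with (RtoC 0) by reflexivity. rewrite Cabs_RtoC. apply Rabs_R0. Qed.

Theorem theorem2p3 :
  forall (a1 a2 : R) (h1 g1 h2 g2 : Cx -> Cx),
    -1 <= a1 <= 1 -> -1 <= a2 <= 1 ->
    in_SH h1 g1 -> in_SH h2 g2 ->
    (forall z, inE z -> Cadd (h1 z) (g1 z) = shear_sum a1 z) ->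
    (forall z, inE z -> Cadd (h2 z) (g2 z) = shear_sum a2 z) ->
    a1 = a2 ->
    forall t : R, 0 <= t <= 1 ->
      in_SH (cmix t h1 h2) (cmix t g1 g2) /\
      convex_imag (imageE (harm (cmix t h1 h2) (cmix t g1 g2))).
Proof.
  intros a1 a2 h1 g1 h2 g2 Ha1 Ha2 [h1' [g1' [D1 [L1 [U1 [Z1 N1]]]]]] [h2' [g2' [D2 [L2 [U2 [Z2 N2]]]]]] S1 S2 Ea t Ht.
  subst a2.
  set (h' := fun z => Cadd (Cmul (RtoC t) (h1' z)) (Cmul (RtoC (1 - t)) (h2' z))).
  set (g' := fun z => Cadd (Cmul (RtoC t) (g1' z)) (Cmul (RtoC (1 - t)) (g2' z))).
  assert (Hd : forall z, inE z -> has_cderiv (cmix t h1 h2) z (h' z) /\ has_cderiv (cmix t g1 g2) z (g' z)).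
  { intros z Hz. destruct (D1 z Hz) as [A1 B1]. destruct (D2 z Hz) as [A2 B2]. unfold cmix, h', g'. split.
    - apply (deriv_add (fun w => Cmul (RtoC t) (h1 w)) (fun w => Cmul (RtoC (1-t)) (h2 w))); apply deriv_scal; auto.
    - apply (deriv_add (fun w => Cmul (RtoC t) (g1 w)) (fun w => Cmul (RtoC (1-t)) (g2 w))); apply deriv_scal; auto. }
  assert (Hlt : forall z, inE z -> Cabs (g' z) < Cabs (h' z)).
  { intros z Hz.
    assert (ES : Cadd (h1' z) (g1' z) = Cadd (h2' z) (g2' z)).
    { destruct (D1 z Hz) as [A1 B1]. destruct (D2 z Hz) as [A2 B2].
      apply (deriv_unique (fun w => Cadd (h1 w) (g1 w)) (fun w => Cadd (h2 w) (g2 w)) z _ _ (1 - Cabs z));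
        [apply deriv_add; auto|apply deriv_add; auto| unfold inE in Hz; lra|].
      intros w Hw. assert (inE w).
      { unfold inE. replace w with (Cadd z (Csub w z)) by ring.
        eapply Rle_lt_trans; [apply Cabs_triangle|]. lra. }
      rewrite S1, S2; auto. }
    set (S := Cadd (h1' z) (g1' z)).
    assert (G1 : g1' z = Csub S (h1' z)) by (unfold S; ring).
    assert (G2 : g2' z = Csub S (h2' z)) by (unfold S; rewrite ES; ring).
    assert (Eg : g' z = Csub S (h' z)).
    { unfold g', h'. rewrite G1, G2. apply Cx_eq; unfold Csub, Cadd, Copp, Cmul, RtoC; simpl; ring. }
    rewrite Eg. apply mix_ineq; auto.
    - rewrite <- G1. destruct (L1 z Hz) as [Nz C]. rewrite Cabs_div in C by auto.
      pose proof (Cabs_pos _ Nz). apply (Rmult_lt_compat_r (Cabs (h1' z))) in C; auto.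
      unfold Rdiv in C. rewrite Rmult_assoc, Rinv_l, Rmult_1_r, Rmult_1_l in C by (apply Rgt_not_eq; lra). auto.
    - rewrite <- G2. destruct (L2 z Hz) as [Nz C]. rewrite Cabs_div in C by auto.
      pose proof (Cabs_pos _ Nz). apply (Rmult_lt_compat_r (Cabs (h2' z))) in C; auto.
      unfold Rdiv in C. rewrite Rmult_assoc, Rinv_l, Rmult_1_r, Rmult_1_l in C by (apply Rgt_not_eq; lra). auto. }
  assert (Hs : forall z, inE z -> Cadd (cmix t h1 h2 z) (cmix t g1 g2 z) = shear_sum a1 z).
  { intros z Hz. specialize (S1 z Hz). specialize (S2 z Hz).
    replace (Cadd (cmix t h1 h2 z) (cmix t g1 g2 z)) with
      (Cadd (Cmul (RtoC t) (Cadd (h1 z) (g1 z))) (Cmul (RtoC (1 - t)) (Cadd (h2 z) (g2 z)))) by (unfold cmix; ring).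
    rewrite S1, S2. apply Cx_eq; unfold Cadd, Cmul, RtoC; simpl; ring. }
  split.
  - exists h', g'. split; [exact Hd|]. split.
    + intros z Hz. pose proof (Hlt z Hz).
      assert (Nz : h' z <> C0).
      { intro E. rewrite E, Cabs_C0 in H. pose proof (Cabs_ge0 (g' z)). lra. }
      split; auto. rewrite Cabs_div by auto. pose proof (Cabs_pos _ Nz).
      apply (Rmult_lt_reg_r (Cabs (h' z))); auto. unfold Rdiv.
      rewrite Rmult_assoc, Rinv_l, Rmult_1_r, Rmult_1_l by (apply Rgt_not_eq; lra). auto.
    + split; [|split].
      * exact (shear_univalent a1 (cmix t h1 h2) (cmix t g1 g2) h' g' Ha1 Hd Hlt Hs).
      * unfold harm, cmix in *. apply Cx_eq.
        -- pose proof (f_equal fst Z1). pose proof (f_equal fst Z2).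
           unfold Cadd, Cmul, Cconj, RtoC, C0 in *; simpl in *. nra.
        -- pose proof (f_equal snd Z1). pose proof (f_equal snd Z2).
           unfold Cadd, Cmul, Cconj, RtoC, C0 in *; simpl in *. nra.
      * unfold h'. rewrite N1, N2. apply Cx_eq; unfold Cadd, Cmul, RtoC, C1; simpl; ring.
  - exact (shear_convex a1 (cmix t h1 h2) (cmix t g1 g2) h' g' Ha1 Hd Hlt Hs).
Qed.
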